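(* Let $V$ be a real Lorentzian vector space (signature $(1,q)$) of dimension $m=1+q\ge3$, and let $\nabla R$ be a covariant derivative algebraic curvature tensor on $V$. If $\operatorname{trace}\{\mathcal{S}_{\nabla R}(x)^2\}$ is constant for $x\in S^+(V)$ and constant for $x\in S^-(V)$, then $\nabla R=0$.
   Context: A covariant derivative algebraic curvature tensor is $\nabla R\in\otimes^5V^*$ satisfying $\nabla R(a,b,c,d;e)=-\nabla R(b,a,c,d;e)=\nabla R(c,d,a,b;e)$, $\nabla R(a,b,c,d;e)+\nabla R(a,c,d,b;e)+\nabla R(a,d,b,c;e)=0$, and $\nabla R(a,b,c,d;e)+\nabla R(a,b,d,e;c)+\nabla R(a,b,e,c;d)=0$. The Szab\'o operator is defined by $(\mathcal{S}_{\nabla R}(x)y,w)=\nabla R(y,x,x,w;x)$. $S^\pm(V)=\{v\in V:(v,v)=\pm1\}$. *)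

(* Defs.v *)
From HB Require Import structures.
From mathcomp Require Import all_boot all_order all_algebra.
From mathcomp Require Import reals ring.
Set Implicit Arguments. Unset Strict Implicit. Unset Printing Implicit Defensive.
Import Order.TTheory GRing.Theory Num.Theory.
Local Open Scope ring_scope.

(* The Lorentzian vector space R^{1,q}: V = 'rV[R]_(q.+1) with the inner product
   (u,v) = - u_0 v_0 + u_1 v_1 + ... + u_q v_q  (signature (1,q)). *)
Definition leps {R : realType} {q : nat} (i : 'I_q.+1) : R :=
  if i == ord0 then -1 else 1.

Definition lip {R : realType} {q : nat} (u v : 'rV[R]_q.+1) : R :=
  \sum_(i < q.+1) leps i * u 0 i * v 0 i.

Definition tensor5 (R : realType) (m : nat) :=
  'I_m -> 'I_m -> 'I_m -> 'I_m -> 'I_m -> R.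

Definition tev {R : realType} {m : nat} (T : tensor5 R m)
  (a b c d e : 'rV[R]_m) : R :=
  \sum_(i < m) \sum_(j < m) \sum_(k < m) \sum_(l < m) \sum_(n < m)
    T i j k l n * a 0 i * b 0 j * c 0 k * d 0 l * e 0 n.

Definition is_cov_deriv_act {R : realType} {m : nat} (T : tensor5 R m) : Prop :=
  forall a b c d e : 'rV[R]_m,
    [/\ tev T a b c d e = - tev T b a c d e,
        tev T a b c d e = tev T c d a b e,
        tev T a b c d e + tev T a c d b e + tev T a d b c e = 0
      & tev T a b c d e + tev T a b d e c + tev T a b e c d = 0].

Definition evec {R : realType} {m : nat} (j : 'I_m) : 'rV[R]_m := delta_mx 0 j.

(* Szabo operator S(x) : V -> V, as a matrix acting on row vectors y |-> y *m S(x),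
   characterised by (S(x) y, w) = nablaR(y, x, x, w; x)  (see szaboP). *)
Definition szabo {R : realType} {q : nat} (T : tensor5 R q.+1)
  (x : 'rV[R]_q.+1) : 'M[R]_q.+1 :=
  \matrix_(j, i) (leps i * tev T (evec j) x x (evec i) x).

Lemma tev_e1 (R : realType) m (T : tensor5 R m) j b c (d : 'rV_m) e :
  tev T (evec j) b c d e = \sum_(k < m) \sum_(l < m) \sum_(n < m) \sum_(p < m)
    T j k l n p * b 0 k * c 0 l * d 0 n * e 0 p.
Proof.
rewrite /tev (bigD1 j) //= [X in _ + X]big1 ?addr0.
  apply: eq_bigr => k _; apply: eq_bigr => l _; apply: eq_bigr => n _; apply: eq_bigr => p _.
  by rewrite /evec mxE !eqxx mulr1.
move=> i ij.
rewrite big1 // => ? _; rewrite big1 // => ? _; rewrite big1 // => ? _;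
  rewrite big1 // => ? _; rewrite /evec mxE eqxx /= (negbTE ij) /=.
by rewrite !mulr0 !mul0r.
Qed.

Lemma tev_e14 (R : realType) m (T : tensor5 R m) j b c i e :
  tev T (evec j) b c (evec i) e = \sum_(k < m) \sum_(l < m) \sum_(p < m)
    T j k l i p * b 0 k * c 0 l * e 0 p.
Proof.
rewrite tev_e1; apply: eq_bigr => k _; apply: eq_bigr => l _.
rewrite (bigD1 i) //= [X in _ + X]big1 ?addr0.
  by apply: eq_bigr => p _; rewrite /evec mxE !eqxx mulr1.
move=> n ni; apply: big1 => p _; rewrite /evec mxE eqxx /= (negbTE ni).
by rewrite mulr0 mul0r.
Qed.

Lemma szaboP (R : realType) q (T : tensor5 R q.+1) (x y w : 'rV[R]_q.+1) :
  lip (y *m szabo T x) w = tev T y x x w x.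
Proof.
have e2 : forall i : 'I_q.+1, leps i * leps i = 1 :> R.
  by move=> i; rewrite /leps; case: (i == ord0); rewrite ?mulrNN mulr1.
rewrite /lip /tev.
under eq_bigr => i _ do rewrite mxE big_distrr /= big_distrl /=.
rewrite exchange_big /=; apply: eq_bigr => j _.
transitivity (\sum_(i < q.+1) \sum_(k < q.+1) \sum_(l < q.+1) \sum_(p < q.+1)
   T j k l i p * y 0 j * x 0 k * x 0 l * w 0 i * x 0 p).
  apply: eq_bigr => i _; rewrite mxE tev_e14.
  set S := \sum_(k < q.+1) _.
  have -> : leps i * (y 0 j * (leps i * S)) * w 0 i =
            (leps i * leps i) * (y 0 j * w 0 i * S) by ring.
  rewrite e2 mul1r /S big_distrr; apply: eq_bigr => k _.
  rewrite big_distrr; apply: eq_bigr => l _.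
  rewrite big_distrr; apply: eq_bigr => p _.

rewrite /=; ring.
rewrite exchange_big; apply: eq_bigr => k _.
by rewrite exchange_big.
Qed.

(* Main.v *)
Require Import Defs.
From HB Require Import structures.
From mathcomp Require Import all_boot all_order all_algebra.
From mathcomp Require Import reals ring lra.
Set Implicit Arguments. Unset Strict Implicit. Unset Printing Implicit Defensive.
Import Order.TTheory GRing.Theory Num.Theory.
Local Open Scope ring_scope.


Section Lin.
Variables (R : realType) (m : nat) (T : tensor5 R m).
Implicit Types a b c d e : 'rV[R]_m.

Ltac lin_tac := rewrite /tev big_distrr -big_split; apply: eq_bigr => ? _;
  rewrite big_distrr -big_split; apply: eq_bigr => ? _;
  rewrite big_distrr -big_split; apply: eq_bigr => ? _;
  rewrite big_distrr -big_split; apply: eq_bigr => ? _;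
  rewrite big_distrr -big_split; apply: eq_bigr => ? _;
  rewrite !mxE /=; ring.

Lemma tevL1 r a a' b c d e : tev T (r *: a + a') b c d e = r * tev T a b c d e + tev T a' b c d e.
Proof. lin_tac. Qed.
Lemma tevL2 r a b b' c d e : tev T a (r *: b + b') c d e = r * tev T a b c d e + tev T a b' c d e.
Proof. lin_tac. Qed.
Lemma tevL3 r a b c c' d e : tev T a b (r *: c + c') d e = r * tev T a b c d e + tev T a b c' d e.
Proof. lin_tac. Qed.
Lemma tevL4 r a b c d d' e : tev T a b c (r *: d + d') e = r * tev T a b c d e + tev T a b c d' e.
Proof. lin_tac. Qed.
Lemma tevL5 r a b c d e e' : tev T a b c d (r *: e + e') = r * tev T a b c d e + tev T a b c d e'.
Proof. lin_tac. Qed.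


Lemma tev01 b c d e : tev T 0 b c d e = 0.
Proof. rewrite /tev; do 5 (apply: big1 => ? _); rewrite !mxE /=; ring. Qed.
Lemma tevD1 a b c d e a' : tev T (a + a') b c d e = tev T a b c d e + tev T a' b c d e.
Proof. by rewrite -{1}[a]scale1r tevL1 mul1r. Qed.
Lemma tevZ1 r a b c d e : tev T (r *: a) b c d e = r * tev T a b c d e.
Proof. by rewrite -[r *: a]addr0 tevL1 tev01 addr0. Qed.
Lemma tevN1 a b c d e : tev T (- a) b c d e = - tev T a b c d e.
Proof. by rewrite -scaleN1r tevZ1 mulN1r. Qed.
Lemma tevB1 a b c d e a' : tev T (a - a') b c d e = tev T a b c d e - tev T a' b c d e.
Proof. by rewrite tevD1 tevN1. Qed.
Lemma tev_sum1 (I : finType) (F : I -> 'rV[R]_m) b c d e :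
  tev T (\sum_i F i) b c d e = \sum_i tev T (F i) b c d e.
Proof.
apply: (big_ind2 (fun v r => tev T v b c d e = r)) => //; first exact: tev01.
by move=> ? ? ? ? <- <-; rewrite tevD1.
Qed.

Lemma tev02 a c d e : tev T a 0 c d e = 0.
Proof. rewrite /tev; do 5 (apply: big1 => ? _); rewrite !mxE /=; ring. Qed.
Lemma tevD2 a b c d e b' : tev T a (b + b') c d e = tev T a b c d e + tev T a b' c d e.
Proof. by rewrite -{1}[b]scale1r tevL2 mul1r. Qed.
Lemma tevZ2 r a b c d e : tev T a (r *: b) c d e = r * tev T a b c d e.
Proof. by rewrite -[r *: b]addr0 tevL2 tev02 addr0. Qed.
Lemma tevN2 a b c d e : tev T a (- b) c d e = - tev T a b c d e.
Proof. by rewrite -scaleN1r tevZ2 mulN1r. Qed.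
Lemma tevB2 a b c d e b' : tev T a (b - b') c d e = tev T a b c d e - tev T a b' c d e.
Proof. by rewrite tevD2 tevN2. Qed.
Lemma tev_sum2 (I : finType) (F : I -> 'rV[R]_m) a c d e :
  tev T a (\sum_i F i) c d e = \sum_i tev T a (F i) c d e.
Proof.
apply: (big_ind2 (fun v r => tev T a v c d e = r)) => //; first exact: tev02.
by move=> ? ? ? ? <- <-; rewrite tevD2.
Qed.

Lemma tev03 a b d e : tev T a b 0 d e = 0.
Proof. rewrite /tev; do 5 (apply: big1 => ? _); rewrite !mxE /=; ring. Qed.
Lemma tevD3 a b c d e c' : tev T a b (c + c') d e = tev T a b c d e + tev T a b c' d e.
Proof. by rewrite -{1}[c]scale1r tevL3 mul1r. Qed.
Lemma tevZ3 r a b c d e : tev T a b (r *: c) d e = r * tev T a b c d e.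
Proof. by rewrite -[r *: c]addr0 tevL3 tev03 addr0. Qed.
Lemma tevN3 a b c d e : tev T a b (- c) d e = - tev T a b c d e.
Proof. by rewrite -scaleN1r tevZ3 mulN1r. Qed.
Lemma tevB3 a b c d e c' : tev T a b (c - c') d e = tev T a b c d e - tev T a b c' d e.
Proof. by rewrite tevD3 tevN3. Qed.
Lemma tev_sum3 (I : finType) (F : I -> 'rV[R]_m) a b d e :
  tev T a b (\sum_i F i) d e = \sum_i tev T a b (F i) d e.
Proof.
apply: (big_ind2 (fun v r => tev T a b v d e = r)) => //; first exact: tev03.
by move=> ? ? ? ? <- <-; rewrite tevD3.
Qed.

Lemma tev04 a b c e : tev T a b c 0 e = 0.
Proof. rewrite /tev; do 5 (apply: big1 => ? _); rewrite !mxE /=; ring. Qed.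
Lemma tevD4 a b c d e d' : tev T a b c (d + d') e = tev T a b c d e + tev T a b c d' e.
Proof. by rewrite -{1}[d]scale1r tevL4 mul1r. Qed.
Lemma tevZ4 r a b c d e : tev T a b c (r *: d) e = r * tev T a b c d e.
Proof. by rewrite -[r *: d]addr0 tevL4 tev04 addr0. Qed.
Lemma tevN4 a b c d e : tev T a b c (- d) e = - tev T a b c d e.
Proof. by rewrite -scaleN1r tevZ4 mulN1r. Qed.
Lemma tevB4 a b c d e d' : tev T a b c (d - d') e = tev T a b c d e - tev T a b c d' e.
Proof. by rewrite tevD4 tevN4. Qed.
Lemma tev_sum4 (I : finType) (F : I -> 'rV[R]_m) a b c e :
  tev T a b c (\sum_i F i) e = \sum_i tev T a b c (F i) e.
Proof.
apply: (big_ind2 (fun v r => tev T a b c v e = r)) => //; first exact: tev04.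
by move=> ? ? ? ? <- <-; rewrite tevD4.
Qed.

Lemma tev05 a b c d : tev T a b c d 0 = 0.
Proof. rewrite /tev; do 5 (apply: big1 => ? _); rewrite !mxE /=; ring. Qed.
Lemma tevD5 a b c d e e' : tev T a b c d (e + e') = tev T a b c d e + tev T a b c d e'.
Proof. by rewrite -{1}[e]scale1r tevL5 mul1r. Qed.
Lemma tevZ5 r a b c d e : tev T a b c d (r *: e) = r * tev T a b c d e.
Proof. by rewrite -[r *: e]addr0 tevL5 tev05 addr0. Qed.
Lemma tevN5 a b c d e : tev T a b c d (- e) = - tev T a b c d e.
Proof. by rewrite -scaleN1r tevZ5 mulN1r. Qed.
Lemma tevB5 a b c d e e' : tev T a b c d (e - e') = tev T a b c d e - tev T a b c d e'.
Proof. by rewrite tevD5 tevN5. Qed.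
Lemma tev_sum5 (I : finType) (F : I -> 'rV[R]_m) a b c d :
  tev T a b c d (\sum_i F i) = \sum_i tev T a b c d (F i).
Proof.
apply: (big_ind2 (fun v r => tev T a b c d v = r)) => //; first exact: tev05.
by move=> ? ? ? ? <- <-; rewrite tevD5.
Qed.


End Lin.
Section Sym.
Variables (R : realType) (m : nat) (T : tensor5 R m) (hT : is_cov_deriv_act T).
Implicit Types a b c d e u v x y z : 'rV[R]_m.

Lemma anti12 a b c d e : tev T a b c d e = - tev T b a c d e.
Proof. by case: (hT a b c d e). Qed.
Lemma pairs a b c d e : tev T a b c d e = tev T c d a b e.
Proof. by case: (hT a b c d e). Qed.
Lemma bian1 a b c d e : tev T a b c d e + tev T a c d b e + tev T a d b c e = 0.
Proof. by case: (hT a b c d e). Qed.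
Lemma bian2 a b c d e : tev T a b c d e + tev T a b d e c + tev T a b e c d = 0.
Proof. by case: (hT a b c d e). Qed.
Lemma anti34 a b c d e : tev T a b c d e = - tev T a b d c e.
Proof. by rewrite pairs anti12 (pairs d). Qed.
Lemma tevaa a c d e : tev T a a c d e = 0.
Proof. have := anti12 a a c d e; lra. Qed.
Lemma tevcc a b c e : tev T a b c c e = 0.
Proof. have := anti34 a b c c e; lra. Qed.
Lemma Qsym u v x y w : tev T u x y v w = tev T v y x u w.
Proof. by rewrite pairs anti12 anti34 opprK. Qed.

Definition Gs u v x y z := tev T u x y v z + tev T u y x v z + tev T u x z v y
  + tev T u z x v y + tev T u y z v x + tev T u z y v x.

Lemma L2 (P : 'rV[R]_m -> Prop) A B C D E
  (hG : forall u v x y z, P x -> P y -> P z -> Gs u v x y z = 0)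
  (pA : P A) (pB : P B) (pC : P C) (pD : P D) (pE : P E) :
  tev T A B C D E = 0.
Proof.
have := bian2 A B C E D.
have := bian1 A B D C E.
have := bian1 A B E C D.
have := anti12 B C A D E.
have := pairs A D B C E.
have := pairs A D C B E.
have := bian1 B A C D E.
have := anti12 A B C D E.
have := pairs A C B D E.
have := anti12 B C A E D.
have := pairs A E B C D.
have := pairs A E C B D.
have := bian1 B A C E D.
have := anti12 A B C E D.
have := pairs A C B E D.
have := bian2 A B C D E.
have := bian1 A C D E B.
have := bian1 A B C D E.
have := bian2 A D B E C.
have := hG A D B C E pB pC pE.
have := bian1 A B C E D.
have := bian2 A C B D E.
have := bian2 A C B E D.
have := bian2 B C A E D.
have := bian2 B D A C E.
have := bian1 B A D E C.
have := anti12 A B D E C.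
have := pairs A D B E C.
have := bian2 B C A D E.
have := hG B E A C D pA pC pD.
have := pairs A E B D C.
have := bian2 B D A E C.
have := bian2 A D B C E.
have := hG A E B C D pB pC pD.
have := bian1 A B D E C.
have := bian1 B A D C E.
have := anti12 A B D C E.
have := pairs B C D A E.
have := anti12 A D B C E.
have := anti12 A B E D C.
have := bian1 B C D E A.
have := hG B D A C E pA pC pE.
have := pairs B C E A D.
have := anti12 A E B C D.
rewrite /Gs; lra.
Qed.
End Sym.
Section Lor.
Variables (R : realType) (q : nat) (T : tensor5 R q.+1) (hT : is_cov_deriv_act T).
Local Notation m := q.+1.
Implicit Types a b c d e u v w x y z : 'rV[R]_m.

Definition Em : 'M[R]_m := diag_mx (\row_i leps i).
Definition Bm x : 'M[R]_m := \matrix_(j, i) tev T (evec j) x x (evec i) x.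
Definition Hm x : 'M[R]_m := Em + x^T *m x.
Definition ip2 (H X Y : 'M[R]_m) := \tr (X *m H *m Y *m H).

Lemma leps2 (i : 'I_m) : leps i * leps i = 1 :> R.
Proof. by rewrite /leps; case: (i == ord0); rewrite ?mulrNN mulr1. Qed.

Lemma EmE : Em *m Em = 1%:M.
Proof. by rewrite /Em mulmx_diag; apply/matrixP => i j; rewrite !mxE leps2. Qed.

Lemma EmT : Em^T = Em.
Proof. by rewrite /Em tr_diag_mx. Qed.

Lemma lipE u v : lip u v = (u *m Em *m v^T) 0 0.
Proof.
rewrite /lip /Em mul_mx_diag mxE; apply: eq_bigr => i _; rewrite !mxE; ring.
Qed.

Lemma lipM u v : u *m Em *m v^T = (lip u v)%:M.
Proof. by apply/matrixP => i j; rewrite !ord1 lipE [RHS]mxE eqxx mulr1n. Qed.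

Lemma lipC u v : lip u v = lip v u.
Proof. by rewrite /lip; apply: eq_bigr => i _; ring. Qed.

Lemma lipL1 r u u' v : lip (r *: u + u') v = r * lip u v + lip u' v.
Proof. rewrite /lip big_distrr -big_split /=; apply: eq_bigr => i _; rewrite !mxE /=; ring. Qed.

Lemma lipL2 r u v v' : lip u (r *: v + v') = r * lip u v + lip u v'.
Proof. by rewrite lipC lipL1 !(lipC u). Qed.

Lemma szaboE x : szabo T x = Bm x *m Em.
Proof. by apply/matrixP => j i; rewrite /szabo /Em mul_mx_diag !mxE mulrC. Qed.

Lemma BmT x : (Bm x)^T = Bm x.
Proof. by apply/matrixP => i j; rewrite !mxE (Qsym hT). Qed.

Lemma decomp1 a b c d e : tev T a b c d e = \sum_i a 0 i * tev T (evec i) b c d e.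
Proof.
rewrite {1}(row_sum_delta a) tev_sum1; apply: eq_bigr => i _; by rewrite tevZ1.
Qed.

Lemma decomp4 a b c d e : tev T a b c d e = \sum_i d 0 i * tev T a b c (evec i) e.
Proof.
rewrite {1}(row_sum_delta d) tev_sum4; apply: eq_bigr => i _; by rewrite tevZ4.
Qed.

Lemma Bmx x : Bm x *m x^T = 0.
Proof.
apply/matrixP => j k; rewrite !mxE (ord1 k).
transitivity (tev T (evec j) x x x x); last by rewrite (tevcc hT).
rewrite [RHS]decomp4; apply: eq_bigr => i _; rewrite !mxE; ring.
Qed.

Lemma BmH x : Bm x *m Em = Bm x *m Hm x.
Proof. by rewrite /Hm mulmxDr mulmxA Bmx mul0mx addr0. Qed.

Lemma trS x : \tr (szabo T x *m szabo T x) = ip2 (Hm x) (Bm x) (Bm x).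
Proof. by rewrite szaboE BmH /ip2 !mulmxA. Qed.

Lemma ip2C H X Y : ip2 H X Y = ip2 H Y X.
Proof. by rewrite /ip2 -[X *m H *m Y *m H]mulmxA mxtrace_mulC !mulmxA. Qed.

Lemma ip2L H r X X' Y : ip2 H (r *: X + X') Y = r * ip2 H X Y + ip2 H X' Y.
Proof. by rewrite /ip2 !mulmxDl -!scalemxAl mxtraceD mxtraceZ. Qed.

Lemma ip20 H Y : ip2 H 0 Y = 0.
Proof. by rewrite /ip2 !mul0mx mxtrace0. Qed.

Lemma ip2lin H (al be : R) X Y P :
  ip2 H (al *: X + be *: Y) P = al * ip2 H X P + be * ip2 H Y P.
Proof. by rewrite ip2L -[be *: Y]addr0 ip2L ip20 addr0. Qed.

Lemma ip2sq H (al be : R) X Y : ip2 H (al *: X + be *: Y) (al *: X + be *: Y) =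
  al ^+ 2 * ip2 H X X + 2 * al * be * ip2 H X Y + be ^+ 2 * ip2 H Y Y.
Proof.
rewrite ip2lin (ip2C H X) (ip2C H Y) !ip2lin (ip2C H Y X); ring.
Qed.


Lemma ip2CS H (hpos : forall Y, Y^T = Y -> 0 <= ip2 H Y Y) X Y
  (hX : X^T = X) (hY : Y^T = Y) :
  ip2 H X Y ^+ 2 <= ip2 H X X * ip2 H Y Y.
Proof.
have key al be : 0 <= al ^+ 2 * ip2 H X X + 2 * al * be * ip2 H X Y + be ^+ 2 * ip2 H Y Y.
  rewrite -ip2sq; apply: hpos; by rewrite linearD !linearZ /= hX hY.
have hb := hpos X hX; have hw := hpos Y hY.
move: key hb hw; set b := ip2 H X X; set w := ip2 H Y Y; set t := ip2 H X Y => key hb hw.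
have [w0|wpos] : w = 0 \/ 0 < w by move: hw; rewrite le0r => /orP[/eqP|]; [left|right].
  have [t0|tn0] := eqVneq t 0; first by rewrite t0 expr0n /= w0 mulr0.
  have := key 1 (- (b + 1) / (2 * t)).
  have -> : 2 * 1 * (- (b + 1) / (2 * t)) * t = - (b + 1) by field; rewrite tn0.
  rewrite w0 mulr0 addr0 expr1n mul1r; lra.
have := key w (- t).
have -> : w ^+ 2 * b + 2 * w * - t * t + (- t) ^+ 2 * w = w * (w * b - t ^+ 2) by ring.
rewrite pmulr_rge0 // subr_ge0 mulrC //.
Qed.

Definition Lm x : 'M[R]_m := \matrix_(k, i)
  if k == ord0 then (if i == ord0 then (x 0 ord0 ^+ 2 - 1) / x 0 ord0 else x 0 i)
  else (if i == ord0 then x 0 k / x 0 ord0 else (k == i)%:R).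

Lemma lip_split x : lip x x = - x 0 ord0 ^+ 2 + \sum_(k | k != ord0) x 0 k ^+ 2.
Proof.
rewrite /lip (bigD1 ord0) //= /leps eqxx; congr (_ + _); first ring.
by apply: eq_bigr => k /negbTE ->; ring.
Qed.

Lemma x0nz x : lip x x = -1 -> x 0 ord0 != 0.
Proof.
move=> h; apply/eqP => h0; move: h; rewrite lip_split h0 expr0n /= oppr0 add0r.
have : 0 <= \sum_(k | k != ord0) x 0 k ^+ 2 by apply: sumr_ge0 => k _; exact: sqr_ge0.
lra.
Qed.

Lemma HmL x : lip x x = -1 -> Hm x = (Lm x)^T *m Lm x.
Proof.
move=> hx; have x0 := x0nz hx; have hs := lip_split x; rewrite hx in hs.
have hs' : \sum_(k | k != ord0) x 0 k ^+ 2 = x 0 ord0 ^+ 2 - 1 by lra.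
apply/matrixP => i j; rewrite /Hm /Em !mxE big_ord1 !mxE (bigD1 ord0) //= !mxE eqxx /=.
under eq_bigr => k hk do rewrite !mxE (negbTE hk).
change (x ord0) with (x 0).
have [->|i0] := eqVneq i ord0; have [->|j0] := eqVneq j ord0;
  rewrite ?eqxx ?(negbTE i0) ?(negbTE j0) /=.
- rewrite (eq_bigr (fun k => x 0 k ^+ 2 * (x 0 ord0)^-1 ^+ 2)); last by move=> k _; ring.
  rewrite -mulr_suml hs' /leps eqxx mulr1n; field; exact: x0.
- rewrite (bigD1 j) //= eqxx mulr1 big1 ?addr0; last first.
    by move=> k /andP[_ /negbTE ->]; rewrite mulr0.
  rewrite mulr0n add0r; field; exact: x0.
- rewrite (bigD1 i) //= eqxx mul1r big1 ?addr0; last first.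
    by move=> k /andP[_ /negbTE ->]; rewrite mul0r.
  rewrite mulr0n add0r; field; exact: x0.
- rewrite (bigD1 i) //= eqxx mul1r big1 ?addr0; last first.
    by move=> k /andP[_ /negbTE ->]; rewrite mul0r.
  rewrite /leps (negbTE i0); case: (i == j) => /=; rewrite ?mulr1n ?mulr0n; ring.
Qed.


Lemma ip2_pos x : lip x x = -1 -> forall Y, Y^T = Y -> 0 <= ip2 (Hm x) Y Y.
Proof.
move=> hx Y hY; rewrite (HmL hx) /ip2; set L := Lm x.
have -> : \tr (Y *m (L^T *m L) *m Y *m (L^T *m L)) =
          \tr ((L *m Y *m L^T) *m (L *m Y *m L^T)).
  by rewrite !mulmxA mxtrace_mulC !mulmxA.
set M := L *m Y *m L^T.
have hM : M^T = M by rewrite /M !trmx_mul trmxK hY mulmxA.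
rewrite /mxtrace; apply: sumr_ge0 => i _; rewrite mxE; apply: sumr_ge0 => j _.
have -> : M j i = M i j by rewrite -[in LHS]hM mxE.
by rewrite -expr2 sqr_ge0.
Qed.

Lemma HmT x : (Hm x)^T = Hm x.
Proof. by rewrite /Hm linearD /= EmT trmx_mul trmxK. Qed.

Lemma wH x v : lip v x = 0 -> v *m Em *m Hm x = v.
Proof.
move=> hv; rewrite /Hm mulmxDr -(mulmxA v Em Em) EmE mulmx1 mulmxA lipM hv.
by rewrite mul_scalar_mx scale0r addr0.
Qed.

Lemma vBv x v : (v *m Bm x *m v^T) 0 0 = tev T v x x v x.
Proof.
rewrite mxE; under eq_bigr => i _ do rewrite !mxE mulr_suml.
rewrite exchange_big /= (decomp1 v); apply: eq_bigr => j _.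
rewrite decomp4 mulr_sumr; apply: eq_bigr => i _; rewrite !mxE; ring.
Qed.

Definition Wm v : 'M[R]_m := (v *m Em)^T *m (v *m Em).

Lemma ip2BW x v : lip v x = 0 -> ip2 (Hm x) (Bm x) (Wm v) = tev T v x x v x.
Proof.
move=> hv; rewrite /ip2 /Wm; set w := v *m Em; set H := Hm x.
have hwH : w *m H = v by exact: wH.
have hHw : H *m w^T = v^T by rewrite -[H]HmT -trmx_mul hwH.
have -> : Bm x *m H *m (w^T *m w) *m H = (Bm x *m H *m w^T) *m (w *m H) by rewrite !mulmxA.
rewrite mxtrace_mulC hwH -mulmxA hHw mulmxA trace_mx11; exact: vBv.
Qed.

Lemma ip2WW x v : lip v x = 0 -> ip2 (Hm x) (Wm v) (Wm v) = lip v v ^+ 2.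
Proof.
move=> hv; rewrite /ip2 /Wm; set w := v *m Em; set H := Hm x.
have hwH : w *m H = v by exact: wH.
have hvw : v *m w^T = (lip v v)%:M by rewrite /w trmx_mul EmT mulmxA lipM.
have -> : w^T *m w *m H *m (w^T *m w) *m H = w^T *m ((w *m H *m w^T) *m (w *m H))
  by rewrite !mulmxA.
rewrite !hwH hvw mul_scalar_mx -scalemxAr mxtraceZ mxtrace_mulC hvw mxtrace_scalar.
by rewrite expr2.
Qed.

Lemma keyineq x v : lip x x = -1 -> lip v x = 0 ->
  tev T v x x v x ^+ 2 <= \tr (szabo T x *m szabo T x) * lip v v ^+ 2.
Proof.
move=> hx hv; rewrite trS -(ip2BW hv) -(ip2WW hv).
apply: ip2CS; [exact: ip2_pos hx | exact: BmT | by rewrite /Wm trmx_mul trmxK].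
Qed.


Lemma unb (p q0 K : R) : (forall r, 0 < r -> (r * p + q0 / r) ^+ 2 <= K) -> p = 0.
Proof.
move=> H; have [//|p0] := eqVneq p 0; exfalso.
set z := K - 2 * p * q0.
have hpp : 0 < `|p| by rewrite normr_gt0.
have z1 : 0 < z ^+ 2 + 1 by have := sqr_ge0 z; lra.
set r := (z ^+ 2 + 1) / `|p|.
have r0 : 0 < r by rewrite divr_gt0.
have := H r r0.
have rn0 : r != 0 by rewrite gt_eqF.
have e1 : (r * p + q0 / r) ^+ 2 = r ^+ 2 * p ^+ 2 + 2 * p * q0 + q0 ^+ 2 / r ^+ 2.
  by field.
have e2 : r ^+ 2 * p ^+ 2 = (z ^+ 2 + 1) ^+ 2.
  have np : `|p| ^+ 2 = p ^+ 2 by rewrite real_normK // num_real.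
  rewrite /r -np; field; by rewrite gt_eqF.
have e3 : 0 <= q0 ^+ 2 / r ^+ 2 by rewrite divr_ge0 // sqr_ge0.
have e4 : z < (z ^+ 2 + 1) ^+ 2 by nra.
rewrite e1 e2; move: e3 e4; rewrite /z; lra.
Qed.

Lemma liplin (al be : R) u v w : lip (al *: u + be *: v) w = al * lip u w + be * lip v w.
Proof.
have l0 : lip 0 w = 0 by rewrite /lip big1 // => i _; rewrite mxE; ring.
by rewrite lipL1 -[be *: v]addr0 lipL1 l0 addr0.
Qed.

Lemma liplin2 (al be : R) u v w : lip w (al *: u + be *: v) = al * lip w u + be * lip w v.
Proof. by rewrite lipC liplin !(lipC w). Qed.

Lemma det12 (al be ga de : R) a b c d e :
  tev T (al *: a + be *: b) (ga *: a + de *: b) c d e = (al * de - be * ga) * tev T a b c d e.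
Proof. rewrite !tevD1 !tevZ1 !tevD2 !tevZ2 !(tevaa hT) (anti12 hT b a); ring. Qed.

Lemma det34 (al be ga de : R) a b c d e :
  tev T c d (al *: a + be *: b) (ga *: a + de *: b) e = (al * de - be * ga) * tev T c d a b e.
Proof. rewrite !tevD3 !tevZ3 !tevD4 !tevZ4 !(tevcc hT) (anti34 hT _ _ b a); ring. Qed.

Lemma hyper (c : R) (hc : forall x, lip x x = -1 -> \tr (szabo T x *m szabo T x) = c)
  t s : lip t t = -1 -> lip s s = 1 -> lip s t = 0 -> tev T s t t s t = 0.
Proof.
move=> ht hs hst; have hts : lip t s = 0 by rewrite lipC.
set a := tev T s t t s t; set b := tev T s t t s s.
have H : forall r, 0 < r -> (r * ((a + b) / 2) + ((a - b) / 2) / r) ^+ 2 <= c.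
  move=> r r0; have rn0 : r != 0 by rewrite gt_eqF.
  set la := (r + r^-1) / 2; set mu := (r - r^-1) / 2.
  have lm : la ^+ 2 - mu ^+ 2 = 1 by rewrite /la /mu; field.
  set x := la *: t + mu *: s; set x' := mu *: t + la *: s.
  have hx : lip x x = -1.
    rewrite /x liplin !liplin2 ht hs hts hst; lra.
  have hx' : lip x' x = 0.
    rewrite /x' /x liplin !liplin2 ht hs hts hst; ring.
  have hx'' : lip x' x' = 1.
    rewrite /x' liplin !liplin2 ht hs hts hst; lra.
  have := keyineq hx hx'; rewrite hc // hx'' expr1n mulr1.
  have -> : tev T x' x x x' x = la * a + mu * b.
    rewrite /x' /x det12 det34 tevD5 !tevZ5 !(anti12 hT t s) -/a -/b.
    have -> : mu * mu - la * la = -1 by lra.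
    have -> : la * la - mu * mu = 1 by lra.
    ring.
  have -> : la * a + mu * b = r * ((a + b) / 2) + (a - b) / 2 / r by rewrite /la /mu; field.
  done.
have P0 := unb H.
have Q0 : (a - b) / 2 = 0.
  apply: (unb (q0 := (a + b) / 2) (K := c)) => r r0.
  have rn0 : r != 0 by rewrite gt_eqF.
  have ri : 0 < r^-1 by rewrite invr_gt0.
  have := H r^-1 ri.
  have -> : r^-1 * ((a + b) / 2) + (a - b) / 2 / r^-1 = r * ((a - b) / 2) + (a + b) / 2 / r
    by field.
  done.
have : a = (a + b) / 2 + (a - b) / 2 by field.
by rewrite P0 Q0 addr0.
Qed.


Lemma lipZl (al : R) u v : lip (al *: u) v = al * lip u v.
Proof. rewrite /lip big_distrr; apply: eq_bigr => i _; rewrite mxE /=; ring. Qed.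

Lemma lipZr (al : R) u v : lip u (al *: v) = al * lip u v.
Proof. by rewrite lipC lipZl lipC. Qed.

Lemma lip_perp_ge0 x s : lip x x = -1 -> lip s x = 0 -> 0 <= lip s s.
Proof.
move=> hx hs.
have e : s *m Em *m Hm x *m (s *m Em)^T = (lip s s)%:M.
  by rewrite wH // trmx_mul EmT mulmxA lipM.
set y := s *m Em *m (Lm x)^T.
have e2 : s *m Em *m Hm x *m (s *m Em)^T = y *m y^T.
  by rewrite HmL // /y !trmx_mul trmxK !mulmxA.
have : 0 <= (y *m y^T) 0 0.
  rewrite mxE; apply: sumr_ge0 => i _; rewrite [y^T _ _]mxE -expr2; exact: sqr_ge0.
by rewrite -e2 e mxE eqxx mulr1n.
Qed.

Lemma Zlem (c : R) (hc : forall x, lip x x = -1 -> \tr (szabo T x *m szabo T x) = c)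
  t u : lip t t < 0 -> tev T u t t u t = 0.
Proof.
move=> ht.
set k := Num.sqrt (- lip t t).
have k0 : 0 < k by rewrite sqrtr_gt0 oppr_gt0.
have kn0 : k != 0 by rewrite gt_eqF.
have kk : k ^+ 2 = - lip t t by rewrite sqr_sqrtr // oppr_ge0 ltW.
set th := k^-1 *: t.
have hth : lip th th = -1.
  rewrite /th lipZl lipZr; have -> : lip t t = - k ^+ 2 by rewrite kk opprK.
  by field.
have tth : t = k *: th by rewrite /th scalerA mulfV // scale1r.
clearbody th.
set al := lip u th.
set sv := u + al *: th.
have hsv : lip sv th = 0.
  by rewrite /sv -[u]scale1r liplin hth /al; ring.
have hs0 : tev T sv th th sv th = 0.
  have := lip_perp_ge0 hth hsv; rewrite le0r => /orP[/eqP s0|spos].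
    have := keyineq hth hsv; rewrite s0 expr0n /= mulr0 => h.
    by apply/eqP; rewrite -sqrf_eq0 eq_le h sqr_ge0.
  set k2 := Num.sqrt (lip sv sv).
  have k20 : 0 < k2 by rewrite sqrtr_gt0.
  have k2n0 : k2 != 0 by rewrite gt_eqF.
  have kk2 : k2 ^+ 2 = lip sv sv by rewrite sqr_sqrtr // ltW.
  set sh := k2^-1 *: sv.
  have hsh : lip sh sh = 1.
    rewrite /sh lipZl lipZr -kk2; by field.
  have hsht : lip sh th = 0 by rewrite /sh lipZl hsv mulr0.
  have := hyper hc hth hsh hsht.
  rewrite /sh tevZ1 tevZ4 => /eqP; rewrite !mulf_eq0 !invr_eq0 (negbTE k2n0) /=.
  by move/eqP.
have hu : u = sv - al *: th by rewrite /sv addrK.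
have hu0 : tev T u th th u th = 0.
  rewrite hu tevB1 !tevB4 !tevZ1 !tevZ4 !(tevaa hT) !(tevcc hT) hs0; ring.
rewrite tth tevZ2 tevZ3 tevZ5 hu0; ring.
Qed.


Definition Gd v := \sum_(k | k != ord0) `|v 0 k| < v 0 ord0.

Lemma sumsq_le (f : 'I_m -> R) (P : pred 'I_m) : (forall i, 0 <= f i) ->
  \sum_(i | P i) f i ^+ 2 <= (\sum_(i | P i) f i) ^+ 2.
Proof.
move=> f0; rewrite expr2 mulr_suml; apply: ler_sum => i Pi.
rewrite mulr_sumr (bigD1 i) //= -expr2 lerDl; apply: sumr_ge0 => j _.
exact: mulr_ge0.
Qed.

Lemma Gd_lip v : Gd v -> lip v v < 0.
Proof.
rewrite /Gd lip_split => h.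
have h0 : 0 <= \sum_(k | k != ord0) `|v 0 k| by apply: sumr_ge0.
have h1 : \sum_(k | k != ord0) v 0 k ^+ 2 <= (\sum_(k | k != ord0) `|v 0 k|) ^+ 2.
  rewrite (eq_bigr (fun k => `|v 0 k| ^+ 2)); last by move=> k _; rewrite real_normK // num_real.
  by apply: sumsq_le.
have h2 : (\sum_(k | k != ord0) `|v 0 k|) ^+ 2 < v 0 ord0 ^+ 2.
  by rewrite ltr_pXn2r ?nnegrE //; apply: le_trans (ltW h).
lra.
Qed.

Lemma Gd_add v w : Gd v -> Gd w -> Gd (v + w).
Proof.
rewrite /Gd => hv hw.
have : \sum_(k | k != ord0) `|(v + w) 0 k| <=
       \sum_(k | k != ord0) `|v 0 k| + \sum_(k | k != ord0) `|w 0 k|.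
  rewrite -big_split /=; apply: ler_sum => k _; rewrite mxE; exact: ler_normD.
rewrite mxE; lra.
Qed.

Definition pv (i : 'I_m) : 'rV[R]_m := 2 *: evec ord0 + evec i.

Lemma Gd_pv i : Gd (pv i).
Proof.
rewrite /Gd /pv !mxE eqxx /=.
rewrite (eq_bigr (fun k => (i == k)%:R)); last first.
  move=> k /negbTE hk; rewrite !mxE /= hk.
  case: eqP => [ki|nki]; case: eqP => [ik|nik] /=;
    rewrite ?mulr0 ?add0r ?normr1 ?normr0 //.
  - by case: nik; rewrite ki.
  - by case: nki; rewrite ik.
have hs : \sum_(k | k != ord0) (i == k)%:R <= 1 :> R.
  rewrite (le_trans _ (_ : \sum_k (i == k)%:R <= 1)) //.
    rewrite [X in _ <= X](bigID (fun k => k != ord0)) /= lerDl.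
    by apply: sumr_ge0 => k _; rewrite ler0n.
  rewrite (bigD1 i) //= eqxx big1 ?addr0 // => k ki; case: eqP => // ik.
  by rewrite ik eqxx in ki.
have : 0 <= (ord0 == i)%:R :> R by rewrite ler0n.
lra.
Qed.

Lemma polar u a b c : Gs T u u a b c =
  tev T u (a + b + c) (a + b + c) u (a + b + c) - tev T u (a + b) (a + b) u (a + b)
  - tev T u (a + c) (a + c) u (a + c) - tev T u (b + c) (b + c) u (b + c)
  + tev T u a a u a + tev T u b b u b + tev T u c c u c.
Proof. rewrite /Gs !tevD2 !tevD3 !tevD5; ring. Qed.

Lemma Gs_pv (c0 : R) (hc : forall x, lip x x = -1 -> \tr (szabo T x *m szabo T x) = c0)
  u i j k : Gs T u u (pv i) (pv j) (pv k) = 0.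
Proof.
have Z w : Gd w -> tev T u w w u w = 0.
  by move=> /Gd_lip h; exact: (@Zlem c0 hc w u h).
have Gi := Gd_pv i; have Gj := Gd_pv j; have Gk := Gd_pv k.
move: Gi Gj Gk; generalize (pv i) (pv j) (pv k) => a b c Ga Gb Gc.
rewrite polar !Z ?Gd_add //; by rewrite !subr0 !addr0.
Qed.

Lemma Gs_ev (c0 : R) (hc : forall x, lip x x = -1 -> \tr (szabo T x *m szabo T x) = c0)
  u i j k : Gs T u u (evec i) (evec j) (evec k) = 0.
Proof.
have e l : evec l = pv l + (- (2 / 3)) *: pv ord0.
  by apply/matrixP => a b; rewrite /pv !mxE; field.
have H0 := Gs_pv hc u i j k.
have H1 := Gs_pv hc u i j ord0.
have H2 := Gs_pv hc u i ord0 k.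
have H3 := Gs_pv hc u i ord0 ord0.
have H4 := Gs_pv hc u ord0 j k.
have H5 := Gs_pv hc u ord0 j ord0.
have H6 := Gs_pv hc u ord0 ord0 k.
have H7 := Gs_pv hc u ord0 ord0 ord0.
rewrite !e; move: H0 H1 H2 H3 H4 H5 H6 H7.
generalize (pv i) (pv j) (pv k) (pv ord0) => A B C D.
rewrite /Gs !tevD2 !tevZ2 !tevD3 !tevZ3 !tevD5 !tevZ5; lra.
Qed.


Lemma GsC u v x y z : Gs T v u x y z = Gs T u v x y z.
Proof. rewrite /Gs !(Qsym hT v u); ring. Qed.

Lemma Gs_uv (c0 : R) (hc : forall x, lip x x = -1 -> \tr (szabo T x *m szabo T x) = c0)
  u v j k n : Gs T u v (evec j) (evec k) (evec n) = 0.
Proof.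
have h1 := Gs_ev hc (u + v) j k n; have h2 := Gs_ev hc u j k n.
have h3 := Gs_ev hc v j k n; have h4 := GsC u v (evec j) (evec k) (evec n).
move: h1 h2 h3 h4; rewrite /Gs !tevD1 !tevD4; lra.
Qed.

Lemma sumd (F : 'I_m -> R) i0 : \sum_k F k * (evec i0 : 'rV[R]_m) 0 k = F i0.
Proof.
rewrite (bigD1 i0) //= big1 ?addr0; first by rewrite mxE !eqxx mulr1.
move=> k /negbTE hk; by rewrite mxE hk andbF mulr0.
Qed.

Lemma comp i j k l n : tev T (evec i) (evec j) (evec k) (evec l) (evec n) = T i j k l n.
Proof.
rewrite tev_e14.
under eq_bigr => ? _ do under eq_bigr => ? _ do rewrite sumd.
under eq_bigr => ? _ do rewrite sumd.
by rewrite sumd.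
Qed.

End Lor.

Theorem theorem1p6 (R : realType) (q : nat) (hq : (2 <= q)%N)
  (T : tensor5 R q.+1) (hT : is_cov_deriv_act T) :
  (exists c : R, forall x : 'rV[R]_q.+1, lip x x = 1 ->
      \tr (szabo T x *m szabo T x) = c) ->
  (exists c : R, forall x : 'rV[R]_q.+1, lip x x = -1 ->
      \tr (szabo T x *m szabo T x) = c) ->
  forall i j k l n : 'I_q.+1, T i j k l n = 0.
Proof.
move=> _ [c hc] i j k l n.
rewrite -(comp T).
apply: (L2 hT (P := fun w => exists a, w = evec a)); try by eexists.
move=> u v x y z [a ->] [b ->] [d ->]; exact: (Gs_uv hT hc).
Qed.
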